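(* Let $\mathbb{K}$ be a field, $m\ge 3$, $R=\mathbb{K}[T_1,\dots,T_m]$, and $I=\langle T_1^{a_1},\dots,T_m^{a_m},T_1^{b_1}\cdots T_m^{b_m}\rangle$ with $0\le b_i<a_i$ for all $i$, $b_i\ne0$ for at least two $i$, and additionally $|\mathbf{b}|=b_1+\cdots+b_m\le\min(a_1,\dots,a_m)$. Let $L\subset S=R[X_1,\dots,X_m,W]$ be the defining ideal of the Rees algebra of $I$. Then $\Gamma_0\cup\Gamma_3$, where $$\Gamma_0=\{\mathcal{P}(X_i,X_j)\mid 1\le j<i\le m+1\},\qquad \Gamma_3=\{\mathcal{P}(W^{|\mathbf{c}|},\mathbf{X}^{\mathbf{c}})\mid \mathbf{0}\ne\mathbf{c}\in\mathbb{N}^m,\ c_i\le b_i\text{ for all }i\},$$ is a (not necessarily reduced) Gröbner basis of $L$ with respect to $\tau$. In particular, $\operatorname{reltype}(I)\le|\mathbf{b}|$.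
   Context: Write $\mathbf{T}^{\mathbf{b}}=T_1^{b_1}\cdots T_m^{b_m}$. $L$ is the kernel of the $R$-algebra map $S\to R[Z]$, $X_i\mapsto T_i^{a_i}Z$, $W\mapsto\mathbf{T}^{\mathbf{b}}Z$; it is graded by total degree in $X_1,\dots,X_m,W$, $L=\bigoplus_{i\ge1}L_i$. Set $X_{m+1}:=W$; for $\mathbf{c}\in\mathbb{N}^m$, $\mathbf{X}^{\mathbf{c}}=\prod X_i^{c_i}$, $|\mathbf{c}|=\sum c_i$. Let $\Psi:S\to R$ be the $R$-algebra map $X_i\mapsto T_i^{a_i}$, $W\mapsto\mathbf{T}^{\mathbf{b}}$. For monomials $M,N$ in $X_1,\dots,X_m,W$, with $g=\gcd(\Psi(M),\Psi(N))$, set $\mathcal{P}(M,N)=\frac{\Psi(N)}{g}M-\frac{\Psi(M)}{g}N$. The order $\tau$ is lex on $S$ with $W>X_m>\cdots>X_1>T_1>\cdots>T_m$. The relation type is $\operatorname{reltype}(I)=\inf\{s\mid L=\langle L_1,\dots,L_s\rangle\}$. *)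

(* Defs.v *)
From HB Require Import structures.
From mathcomp Require Import all_boot all_order all_algebra.
From mathcomp Require Import mpoly.
Unset Printing Implicit Defensive.
Import Order.TTheory GRing.Theory Num.Theory.
Local Open Scope ring_scope.

(* S = K[T_1..T_m, X_1..X_m, W] is {mpoly K[Nv m]} with Nv m = 2m+1 variables:
   index i (0 <= i < m)      is T_{i+1},
   index m+i (0 <= i < m)    is X_{i+1},
   index 2m (= ord_max)      is W.
   R[Z] = K[T_1..T_m, Z] is {mpoly K[m.+1]}: index i < m is T_{i+1}, ord_max is Z.
   Exponent data a, b : nat -> nat; only the values at 0..m-1 (= a_1..a_m) matter. *)
Definition Nv (m : nat) : nat := (m + m).+1.

(* image of the j-th variable of S under S -> R[Z],
   T_i |-> T_i, X_i |-> T_i^{a_i} Z, W |-> T^b Z *)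
Definition phi_var (K : fieldType) (m : nat) (a b : nat -> nat) (j : 'I_(Nv m))
  : {mpoly K[m.+1]} :=
  if (j < m)%N then 'X_(inord j)
  else if (j < m + m)%N then 'X_(inord (j - m)) ^+ a (j - m)%N * 'X_ord_max
  else (\prod_(i < m) 'X_(inord i) ^+ b i) * 'X_ord_max.

Definition phi_tuple (K : fieldType) (m : nat) (a b : nat -> nat)
  : (Nv m).-tuple {mpoly K[m.+1]} :=
  [tuple phi_var K m a b j | j < Nv m].

(* L = kernel of the R-algebra map S -> R[Z] *)
Definition inL (K : fieldType) (m : nat) (a b : nat -> nat) (f : {mpoly K[Nv m]}) : Prop :=
  comp_mpoly (phi_tuple K m a b) f = 0.

(* Psi : S -> R on monomials: exponent vector (in the T-variables) of Psi(M) *)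
Definition psiE (m : nat) (a b : nat -> nat) (M : 'X_{1..Nv m}) : 'X_{1..Nv m} :=
  [multinom (if (i < m)%N then a i * M (inord (m + i)) + b i * M ord_max else 0)%N
   | i < Nv m].

(* P(M,N) = (Psi(N)/g) M - (Psi(M)/g) N, g = gcd(Psi M, Psi N) (componentwise min) *)
Definition Pcal (K : fieldType) (m : nat) (a b : nat -> nat) (M N : 'X_{1..Nv m})
  : {mpoly K[Nv m]} :=
  'X_[[multinom (M i + (psiE m a b N i - minn (psiE m a b M i) (psiE m a b N i)))%N | i < Nv m]]
  - 'X_[[multinom (N i + (psiE m a b M i - minn (psiE m a b M i) (psiE m a b N i)))%N | i < Nv m]].

(* the variable X_{k+1} (k < m), with X_{m+1} := W (k = m) *)
Definition XWvar (m : nat) (k : 'I_m.+1) : 'X_{1..Nv m} :=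
  [multinom (nat_of_bool (i == m + k :> nat)) | i < Nv m].

Definition Wpow (m : nat) (c : nat -> nat) : 'X_{1..Nv m} :=
  [multinom (if i == m + m :> nat then \sum_(j < m) c j else 0)%N | i < Nv m].
Definition Xpow (m : nat) (c : nat -> nat) : 'X_{1..Nv m} :=
  [multinom (if (m <= i < m + m)%N then c (i - m) else 0)%N | i < Nv m].

Definition Gamma0 (K : fieldType) (m : nat) (a b : nat -> nat) (g : {mpoly K[Nv m]}) : Prop :=
  exists (i j : 'I_m.+1), (j < i)%N /\ g = Pcal K m a b (XWvar m i) (XWvar m j).

Definition Gamma3 (K : fieldType) (m : nat) (a b : nat -> nat) (g : {mpoly K[Nv m]}) : Prop :=
  exists c : nat -> nat,
    (exists i, (i < m)%N /\ c i <> 0%N) /\ (forall i, (i < m)%N -> (c i <= b i)%N) /\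
    g = Pcal K m a b (Wpow m c) (Xpow m c).

(* the lex order tau: W > X_m > ... > X_1 > T_1 > ... > T_m *)
Fixpoint lex_lt (s t : seq nat) : bool :=
  match s, t with
  | x :: s', y :: t' => (x < y)%N || ((x == y) && lex_lt s' t')
  | _, _ => false
  end.

Definition tau_priority (m : nat) : seq nat :=
  [seq (m + m - k)%N | k <- iota 0 m.+1] ++ iota 0 m.

Definition tau_key (m : nat) (M : 'X_{1..Nv m}) : seq nat :=
  [seq M (inord j) | j <- tau_priority m].

Definition tau_lt (m : nat) (M N : 'X_{1..Nv m}) : bool :=
  lex_lt (tau_key m M) (tau_key m N).

Definition is_lm (K : fieldType) (n' : nat) (f : {mpoly K[Nv n']}) (M : 'X_{1..Nv n'}) : bool :=
  (M \in msupp f) && all (fun M' => (M' == M) || tau_lt n' M' M) (msupp f).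

Definition mdivides (n : nat) (M N : 'X_{1..n}) : Prop := forall i, (M i <= N i)%N.

Definition groebner_basis (K : fieldType) (m : nat)
  (G J : {mpoly K[Nv m]} -> Prop) : Prop :=
  (forall g, G g -> J g) /\
  (forall f, J f -> f != 0 -> exists g (Mg Mf : 'X_{1..Nv m}),
      [/\ G g, g != 0, is_lm K m g Mg, is_lm K m f Mf & mdivides (Nv m) Mg Mf]).

Definition degXW (m : nat) (M : 'X_{1..Nv m}) : nat :=
  (\sum_(i < Nv m | (m <= i)%N) M i)%N.

Definition homogXW (K : fieldType) (m : nat) (d : nat) (f : {mpoly K[Nv m]}) : bool :=
  all (fun M => degXW m M == d) (msupp f).

Definition generated_in_degrees (K : fieldType) (m : nat) (a b : nat -> nat) (s : nat) : Prop :=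
  forall f, inL K m a b f ->
    exists (k : nat) (h g : 'I_k -> {mpoly K[Nv m]}),
      (forall j, inL K m a b (g j) /\ exists d, [/\ (1 <= d)%N, (d <= s)%N & homogXW K m d (g j)]) /\
      f = \sum_(j < k) h j * g j.

(* Main.v *)
Require Import Defs.
From HB Require Import structures.
From mathcomp Require Import all_boot all_order all_algebra.
From mathcomp Require Import mpoly.
From mathcomp Require Import zify.
From Stdlib Require Import Classical.

Lemma choose_c (m : nat) (F : nat -> nat) (k : nat) :
  k <= \sum_(0 <= i < m) F i ->
  exists c : nat -> nat, (forall i, i < m -> c i <= F i) /\ \sum_(0 <= i < m) c i = k.
Proof.
elim: m k => [|m IH] k.
  rewrite big_geq // leqn0 => /eqP ->; exists (fun _ => 0); split => //.
  by rewrite big_geq.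
rewrite big_nat_recr //= => hk.
case: (leqP k (\sum_(0 <= i < m) F i)) => h.
  have [c [hc hs]] := IH k h.
  exists (fun i => if i < m then c i else 0); split.
    by move=> i _; case: ifP => // /hc.
  rewrite big_nat_recr //= ltnn addn0 -hs; apply: eq_big_nat => i /andP[_ ->] //.
exists (fun i => if i < m then F i else k - \sum_(0 <= i < m) F i); split.
  move=> i hi; case: ifP => // him; have -> : i = m by lia. lia.
rewrite big_nat_recr //= ltnn.
rewrite (eq_big_nat _ _ (F2 := F)); first lia.
by move=> i /andP[_ ->].
Qed.

Lemma sum_le (m : nat) (F G : nat -> nat) :
  (forall i, i < m -> F i <= G i) -> \sum_(0 <= i < m) F i <= \sum_(0 <= i < m) G i.
Proof.
move=> h; rewrite !big_nat; apply: leq_sum => i /andP[_ hi]; exact: h.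
Qed.

Lemma sum_eq0 (m : nat) (F : nat -> nat) :
  (forall i, i < m -> F i = 0) -> \sum_(0 <= i < m) F i = 0.
Proof. by move=> h; rewrite big_nat big1 // => i /andP[_ /h]. Qed.

Lemma core_W (m : nat) (a b al be al' be' : nat -> nat) (w w' : nat) :
  (forall i, i < m -> b i < a i) ->
  0 < \sum_(0 <= j < m) b j ->
  (forall i, i < m -> \sum_(0 <= j < m) b j <= a i) ->
  (forall i, i < m -> al i + a i * be i + b i * w = al' i + a i * be' i + b i * w') ->
  \sum_(0 <= i < m) be i + w = \sum_(0 <= i < m) be' i + w' ->
  w' < w ->
  (exists j, j < m /\ a j - b j <= al j) \/
  (exists c : nat -> nat, (exists i, i < m /\ c i <> 0) /\ (forall i, i < m -> c i <= b i) /\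
     \sum_(0 <= i < m) c i <= w /\
     forall i, i < m -> a i * c i - (\sum_(0 <= j < m) c j) * b i <= al i).
Proof.
move=> hba hB hbmin hT hZ hw.
set B := \sum_(0 <= j < m) b j in hB hbmin.
case: (classic (exists j, j < m /\ a j - b j <= al j)) => [h|hn]; [by left|right].
have hal : forall j, j < m -> al j < a j - b j.
  move=> j hj; case: (leqP (a j - b j) (al j)) => // h; case: hn; by exists j.
set f := fun k i => (al i + k * b i) %/ a i.
set d := w - w'.
have hd : d <= \sum_(0 <= i < m) f d i.
  have h1 : forall i, i < m -> be' i <= be i + f d i.
    move=> i hi; rewrite -leq_subLR leq_divRL; last by have := hba i hi; lia.
    have := hT i hi; rewrite /d; nia.
  have := sum_le m _ _ h1; rewrite big_split /=; lia.
have hstep : forall k, B < k -> \sum_(0 <= i < m) f k i <= \sum_(0 <= i < m) f (k - B) i + B.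
  move=> k hk; rewrite /B -big_split /=; apply: sum_le => i hi.
  rewrite /f -(divnDMl _ _ (_ : 0 < a i)); last by have := hba i hi; lia.
  apply: leq_div2r. have := hbmin i hi; nia.
have [k [hk1 [hkB [hkd hkf]]]] :
    exists k, [/\ 0 < k, k <= B, k <= d & k <= \sum_(0 <= i < m) f k i].
  apply: NNPP => hne.
  have hall : forall n k, k <= n -> 0 < k -> k <= d -> \sum_(0 <= i < m) f k i < k.
    elim=> [|n IHn] k hkn hk0 hkd; first lia.
    case: (leqP k B) => hkB.
      case: (leqP k (\sum_(0 <= i < m) f k i)) => // hle; case: hne; by exists k.
    have := hstep k hkB; have := IHn (k - B); lia.
  have := hall d d (leqnn _); lia.
have hfb : forall i, i < m -> f k i <= b i.
  move=> i hi; rewrite /f -ltnS ltn_divLR; last by have := hba i hi; lia.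
  have := hal i hi; have := hbmin i hi; have := hba i hi; nia.
have [c [hc hcs]] := choose_c m (f k) k hkf.
exists c; split.
  apply: NNPP => hne; have : \sum_(0 <= i < m) c i = 0.
    apply: sum_eq0 => i hi; case: (c i =P 0) => // h; case: hne; by exists i.
  lia.
split; first by move=> i hi; exact: leq_trans (hc i hi) (hfb i hi).
split; first lia.
move=> i hi; rewrite hcs; have := hc i hi; rewrite /f leq_divRL; last by have := hba i hi; lia.
nia.
Qed.

Lemma core_X (m : nat) (a b al be al' be' : nat -> nat) (w : nat) (i : nat) :
  (forall i, i < m -> al i + a i * be i + b i * w = al' i + a i * be' i + b i * w) ->
  \sum_(0 <= i < m) be i + w = \sum_(0 <= i < m) be' i + w ->
  i < m -> be' i < be i -> (forall k, i < k < m -> be' k = be k) ->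
  exists j, j < i /\ a j <= al j.
Proof.
move=> hT hZ hi hlt heq.
apply: NNPP => hn.
have hj : forall j, j < i -> be' j <= be j.
  move=> j hji; case: (leqP (be' j) (be j)) => // h; case: hn; exists j; split => //.
  have := hT j (ltn_trans hji hi); nia.
have e1 : forall F : nat -> nat, \sum_(0 <= k < m) F k =
   \sum_(0 <= k < i) F k + F i + \sum_(i.+1 <= k < m) F k.
  move=> F; rewrite (big_cat_nat _ (n := i)) //=; last by apply: ltnW.
  by rewrite (big_ltn hi) addnA.
have := e1 be; have := e1 be'.
have -> : \sum_(i.+1 <= k < m) be' k = \sum_(i.+1 <= k < m) be k.
  by apply: eq_big_nat => k hk; apply: heq.
have := sum_le i _ _ hj. lia.
Qed.

Import GRing.Theory.

Definition co {m : nat} (u : 'X_{1..Nv m}) (k : nat) : nat := u (inord k).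

Definition phiE (m : nat) (a b : nat -> nat) (u : 'X_{1..Nv m}) : 'X_{1..m.+1} :=
  [multinom (if (i < m)%N then co u i + a i * co u (m + i) + b i * co u (m + m)
             else \sum_(0 <= j < m) co u (m + j) + co u (m + m))%N | i < m.+1].

Definition Vc (m : nat) (a b : nat -> nat) (j i : nat) : nat :=
  if (i < m)%N then (if (j < m)%N then nat_of_bool (j == i)
                     else if (j < m + m)%N then a (j - m) * nat_of_bool (j - m == i)
                     else b i)%N
  else (if (j < m)%N then 0 else 1)%N.

Definition V (m : nat) (a b : nat -> nat) (j : nat) : 'X_{1..m.+1} :=
  [multinom Vc m a b j i | i < m.+1].

Lemma sum_delta (m i : nat) (F : nat -> nat) : (i < m)%N ->
  (\sum_(0 <= j < m) nat_of_bool (j == i) * F j = F i)%N.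
Proof.
move=> hi; rewrite (big_cat_nat _ (n := i)) //=; last exact: ltnW.
rewrite (big_ltn hi) eqxx mul1n big_nat big1; last first.
  by move=> j /andP[_ hj]; rewrite (_ : (j == i) = false) //; apply/negbTE; rewrite neq_ltn hj.
rewrite big_nat big1 ?add0n ?addn0 //.
by move=> j /andP[hj _]; rewrite (_ : (j == i) = false) //; apply/negbTE; rewrite neq_ltn hj orbT.
Qed.

Lemma inord_eqE (n k : nat) (i : 'I_n.+1) : (k < n.+1)%N -> (inord k == i) = (k == i :> nat).
Proof. by move=> hk; rewrite -val_eqE /= inordK. Qed.

Lemma ordmax_eqE (m : nat) (i : 'I_m.+1) : (ord_max == i) = ~~ (i < m)%N.
Proof.
rewrite -val_eqE /=; have := ltn_ord i; rewrite ltnS leq_eqVlt.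
by case/orP => [/eqP ->|h]; rewrite ?eqxx ?ltnn // (gtn_eqF h) h.
Qed.

Lemma phi_varE (K : fieldType) (m : nat) (a b : nat -> nat) (j : 'I_(Nv m)) :
  phi_var K m a b j = 'X_[V m a b j].
Proof.
have ltm : forall k, (k < m)%N -> (k < m.+1)%N by move=> k hk; lia.
rewrite /phi_var; case: ifP => hj.
  congr mpolyX; apply/mnmP => i; rewrite mnm1E /V mnmE /Vc hj inord_eqE ?ltm //.
  case: ifP => // hi; rewrite (_ : (j == i :> nat) = false) //.
  apply/negbTE; move: hi => /negbT; rewrite -leqNgt => hi; rewrite neq_ltn; apply/orP; left; lia.
case: ifP => hj2.
  have hjm : (j - m < m)%N by move: hj => /negbT; rewrite -leqNgt; lia.
  rewrite mpolyXn -mpolyXD; congr mpolyX; apply/mnmP => i.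
  rewrite mnmDE mulmnE !mnm1E /V mnmE /Vc hj hj2 inord_eqE ?ltm //.
  case: ifP => hi.
    rewrite ordmax_eqE hi.
    by rewrite addn0 mulnC.
  have him : (i : nat) = m by have := ltn_ord i; move: hi => /negbT; rewrite -leqNgt; lia.
  rewrite ordmax_eqE hi.
  rewrite him (_ : (j - m == m) = false) //; apply/negbTE; rewrite neq_ltn hjm //.
rewrite mprodXnE -mpolyXD; congr mpolyX; apply/mnmP => i.
rewrite mnmDE mnm_sumE mnm1E /V mnmE /Vc hj hj2.
rewrite (eq_bigr (fun k : 'I_m => nat_of_bool (k == i :> nat) * b k)%N); last first.
  by move=> k _; rewrite mulmnE mnm1E inord_eqE ?ltm.
rewrite -(big_mkord xpredT (fun k => nat_of_bool (k == i :> nat) * b k)%N).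
case: ifP => hi.
  rewrite ordmax_eqE hi.
  by rewrite addn0 sum_delta.
have him : (i : nat) = m by have := ltn_ord i; move: hi => /negbT; rewrite -leqNgt; lia.
rewrite ordmax_eqE hi.
rewrite big_nat big1 // => k /andP[_ hk].
rewrite (_ : (k == i :> nat) = false) //; apply/negbTE; rewrite neq_ltn him hk //.
Qed.

Lemma sum_shift (n k : nat) (F : nat -> nat) :
  (\sum_(n <= j < n + k) F j = \sum_(0 <= j < k) F (j + n))%N.
Proof. by rewrite -{1}(add0n n) big_addn addKn. Qed.

Lemma comp_X (K : fieldType) (m : nat) (a b : nat -> nat) (u : 'X_{1..Nv m}) :
  comp_mpoly (phi_tuple K m a b) 'X_[u] = 'X_[phiE m a b u].
Proof.
rewrite comp_mpolyX.
rewrite (eq_bigr (fun j : 'I_(Nv m) => ('X_[V m a b j] ^+ u j)%R)); last first.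
  by move=> j _; rewrite tnth_mktuple phi_varE.
rewrite mprodXnE; congr mpolyX; apply/mnmP => i.
rewrite mnm_sumE /phiE mnmE.
rewrite (eq_bigr (fun j : 'I_(Nv m) => Vc m a b j i * co u j)%N); last first.
  by move=> j _; rewrite mulmnE /V mnmE /co inord_val.
rewrite -(big_mkord xpredT (fun j => Vc m a b j i * co u j)%N) /Nv big_nat_recr //=.
rewrite (big_cat_nat _ (n := m)) //=; last by lia.
rewrite sum_shift.
rewrite (eq_big_nat _ _ (F1 := fun j => Vc m a b (j + m) i * co u (j + m))
   (F2 := fun j => if (i < m)%N then a j * nat_of_bool (j == i) * co u (m + j) else co u (m + j))%N);
  last first.
  move=> j /andP[_ hj]; rewrite /Vc.
  rewrite (_ : (j + m < m)%N = false); last by apply/negbTE; rewrite -leqNgt; lia.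
  rewrite (_ : (j + m < m + m)%N = true); last by lia.
  by rewrite addnK addnC; case: ifP => _ //; rewrite mul1n.
have hV2 : Vc m a b (m + m) i = (if (i < m)%N then b i else 1%N).
  rewrite /Vc (_ : (m + m < m)%N = false); last by apply/negbTE; rewrite -leqNgt; lia.
  by rewrite ltnn.
rewrite hV2.
case: ifP => hi.
  rewrite (eq_big_nat _ _ (F1 := fun j => Vc m a b j i * co u j)
     (F2 := fun j => nat_of_bool (j == i) * co u j))%N; last first.
    by move=> j /andP[_ hj]; rewrite /Vc hi hj.
  rewrite sum_delta //.
  rewrite (eq_big_nat _ _ (F1 := fun j => a j * nat_of_bool (j == i) * co u (m + j))
     (F2 := fun j => nat_of_bool (j == i) * (a j * co u (m + j))))%N; last first.
    by move=> j _; rewrite mulnAC mulnC.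
  by rewrite sum_delta.
rewrite (eq_big_nat _ _ (F1 := fun j => Vc m a b j i * co u j) (F2 := fun j => 0))%N; last first.
  by move=> j /andP[_ hj]; rewrite /Vc hi hj.
by rewrite big_nat big1 // add0n mul1n.
Qed.

Lemma lex_ltP (s t : seq nat) : lex_lt s t ->
  exists n, [/\ (n < size s)%N, (n < size t)%N,
     (forall k, (k < n)%N -> nth 0%N s k = nth 0%N t k) & (nth 0%N s n < nth 0%N t n)%N].
Proof.
elim: s t => [|x s IH] [|y t] //= /orP[h|/andP[/eqP e h]].
  by exists 0%N; split.
have [n [h1 h2 h3 h4]] := IH t h.
exists n.+1; split => //; case=> [|k] hk //=; apply: h3; exact hk.
Qed.

Lemma lex_lt_intro (s t : seq nat) (n : nat) : (n < size s)%N -> (n < size t)%N ->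
  (forall k, (k < n)%N -> nth 0%N s k = nth 0%N t k) -> (nth 0%N s n < nth 0%N t n)%N ->
  lex_lt s t.
Proof.
elim: s t n => [|x s IH] [|y t] [|n] //= h1 h2 h3 h4.
  by rewrite h4.
have e := h3 0%N isT; rewrite /= in e; rewrite e eqxx ltnn /=.
apply: (IH t n) => // k hk; exact: (h3 k.+1).
Qed.

Lemma lex_lt_irr (s : seq nat) : lex_lt s s = false.
Proof. by elim: s => //= x s ->; rewrite ltnn eqxx. Qed.

Lemma lex_lt_trans (s t r : seq nat) : lex_lt s t -> lex_lt t r -> lex_lt s r.
Proof.
elim: s t r => [|x s IH] [|y t] [|z r] //= /orP[h|/andP[/eqP e h]] /orP[h'|/andP[/eqP e' h']].
- by rewrite (ltn_trans h h').
- by rewrite -e' h.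
- by rewrite e h'.
- by rewrite e e' eqxx (IH t r h h') orbT.
Qed.

Lemma lex_lt_total (s t : seq nat) : size s = size t -> s <> t -> lex_lt s t \/ lex_lt t s.
Proof.
elim: s t => [|x s IH] [|y t] //= [hs] hne.
case: (ltngtP x y) => hxy; [by left|by right|].
subst y; have hne' : s <> t by move=> e; apply: hne; rewrite e.
by case: (IH t hs hne') => h; [left|right]; apply/orP; right; rewrite h.
Qed.

Lemma size_prio (m : nat) : size (tau_priority m) = Nv m.
Proof. by rewrite /tau_priority size_cat size_map !size_iota /Nv addSn. Qed.

Lemma nth_prio (m k : nat) : (k < Nv m)%N ->
  nth 0%N (tau_priority m) k = (if (k <= m)%N then m + m - k else k - m.+1)%N.
Proof.
move=> hk; rewrite /tau_priority nth_cat size_map size_iota ltnS.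
case: ifP => h.
  by rewrite (nth_map 0%N) ?size_iota ?ltnS // nth_iota ?ltnS.
by rewrite nth_iota //; rewrite /Nv in hk; lia.
Qed.

Lemma size_key (m : nat) (M : 'X_{1..Nv m}) : size (tau_key m M) = Nv m.
Proof. by rewrite /tau_key size_map size_prio. Qed.

Lemma nth_key (m k : nat) (M : 'X_{1..Nv m}) : (k < Nv m)%N ->
  nth 0%N (tau_key m M) k = co M (if (k <= m)%N then m + m - k else k - m.+1)%N.
Proof.
by move=> hk; rewrite /tau_key (nth_map 0%N) ?size_prio // nth_prio.
Qed.

Lemma tau_ltP (m : nat) (v u : 'X_{1..Nv m}) : tau_lt m v u ->
  (co v (m + m) < co u (m + m))%N \/
  (co v (m + m) = co u (m + m) /\ exists i, [/\ (i < m)%N, (co v (m + i) < co u (m + i))%N &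
        forall k, (i < k < m)%N -> co v (m + k) = co u (m + k)]) \/
  (co v (m + m) = co u (m + m) /\ (forall i, (i < m)%N -> co v (m + i) = co u (m + i)) /\
        exists i, (i < m)%N /\ (co v i < co u i)%N).
Proof.
move=> /lex_ltP [n [h1 h2 h3 h4]]; rewrite size_key in h1.
have hk : forall k, (k < n)%N -> nth 0%N (tau_key m v) k = nth 0%N (tau_key m u) k by [].
move: h4; rewrite !nth_key //.
have hW : (0 < n)%N -> co v (m + m) = co u (m + m).
  by move=> hn; have := h3 0%N hn; rewrite !nth_key ?subn0 //; rewrite /Nv; lia.
case: n h1 h2 h3 hk hW => [|n] h1 h2 h3 hk hW.
  by rewrite subn0 => h; left.
case: ifP => hnm h.
  right; left; split; first exact: hW.
  exists (m - n.+1)%N; split; first by lia.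
    by move: h; rewrite (_ : (m + m - n.+1 = m + (m - n.+1))%N) //; lia.
  move=> k /andP[hk1 hk2]; have := h3 (m - k)%N; rewrite !nth_key; try (rewrite /Nv; lia).
  rewrite (_ : (m - k <= m)%N) //; last by lia.
  rewrite (_ : (m + m - (m - k) = m + k)%N) //; last by lia.
  by apply; lia.
right; right; split; first exact: hW.
split.
  move=> i hi; have := h3 (m - i)%N; rewrite !nth_key; try (rewrite /Nv; lia).
  rewrite (_ : (m - i <= m)%N) //; last by lia.
  rewrite (_ : (m + m - (m - i) = m + i)%N) //; last by lia.
  by apply; lia.
exists (n.+1 - m.+1)%N; split => //; rewrite /Nv in h1; lia.
Qed.

Lemma tau_lt_W (m : nat) (v u : 'X_{1..Nv m}) :
  (co v (m + m) < co u (m + m))%N -> tau_lt m v u.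
Proof.
move=> h; apply: (lex_lt_intro _ _ 0%N); rewrite ?size_key //.
by rewrite !nth_key // subn0.
Qed.

Lemma tau_lt_X (m : nat) (v u : 'X_{1..Nv m}) (i : nat) :
  co v (m + m) = co u (m + m) -> (i < m)%N -> (co v (m + i) < co u (m + i))%N ->
  (forall k, (i < k < m)%N -> co v (m + k) = co u (m + k)) -> tau_lt m v u.
Proof.
move=> hW hi hlt heq; apply: (lex_lt_intro _ _ (m - i)%N); rewrite ?size_key; try (rewrite /Nv; lia).
  move=> k hk; rewrite !nth_key; try (rewrite /Nv; lia).
  rewrite (_ : (k <= m)%N) //; last by lia.
  case: k hk => [|k] hk; first by rewrite subn0.
  rewrite (_ : (m + m - k.+1 = m + (m - k.+1))%N); last by lia.
  apply: heq; lia.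
rewrite !nth_key; try (rewrite /Nv; lia).
rewrite (_ : (m - i <= m)%N) //; last by lia.
by rewrite (_ : (m + m - (m - i) = m + i)%N) //; lia.
Qed.

Lemma co_inj (m : nat) (u v : 'X_{1..Nv m}) :
  (forall k, (k < Nv m)%N -> co u k = co v k) -> u = v.
Proof.
move=> h; apply/mnmP => i; have := h i (ltn_ord i); by rewrite /co inord_val.
Qed.

Lemma tau_total (m : nat) (u v : 'X_{1..Nv m}) : u <> v -> tau_lt m u v \/ tau_lt m v u.
Proof.
move=> hne; apply: lex_lt_total; first by rewrite !size_key.
move=> e; apply: hne; apply: co_inj => k hk.
rewrite /Nv in hk.
case: (leqP m k) => hkm.
  have := congr1 (fun s => nth 0%N s (m + m - k)%N) e.
  rewrite /= !nth_key; try (rewrite /Nv; lia).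
  rewrite (_ : (m + m - k <= m)%N) //; last by lia.
  by rewrite (_ : (m + m - (m + m - k) = k)%N) //; lia.
have := congr1 (fun s => nth 0%N s (k + m.+1)%N) e.
rewrite /= !nth_key; try (rewrite /Nv; lia).
rewrite (_ : (k + m.+1 <= m)%N = false); last by lia.
by rewrite addnK.
Qed.

Lemma tau_lt_irr (m : nat) (u : 'X_{1..Nv m}) : tau_lt m u u = false.
Proof. exact: lex_lt_irr. Qed.

Lemma tau_lt_trans (m : nat) (u v w : 'X_{1..Nv m}) : tau_lt m u v -> tau_lt m v w -> tau_lt m u w.
Proof. exact: lex_lt_trans. Qed.

Lemma ordmax_inord (n : nat) : (ord_max : 'I_n.+1) = inord n.
Proof. by apply: val_inj; rewrite /= inordK. Qed.

Definition Zs (m : nat) (u : 'X_{1..Nv m}) : nat :=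
  (\sum_(0 <= j < m) co u (m + j) + co u (m + m))%N.

Definition mu (m : nat) (u : 'X_{1..Nv m}) : nat :=
  (\sum_(0 <= j < m) j.+1 * co u (m + j) + m.+1 * co u (m + m))%N.

Definition psiC (m : nat) (a b : nat -> nat) (M : 'X_{1..Nv m}) (k : nat) : nat :=
  if (k < m)%N then (a k * co M (m + k) + b k * co M (m + m))%N else 0%N.

Definition P1 (m : nat) (a b : nat -> nat) (M N : 'X_{1..Nv m}) : 'X_{1..Nv m} :=
  [multinom (M i + (psiE m a b N i - minn (psiE m a b M i) (psiE m a b N i)))%N | i < Nv m].
Definition P2 (m : nat) (a b : nat -> nat) (M N : 'X_{1..Nv m}) : 'X_{1..Nv m} :=
  [multinom (N i + (psiE m a b M i - minn (psiE m a b M i) (psiE m a b N i)))%N | i < Nv m].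

Lemma PcalE (K : fieldType) (m : nat) (a b : nat -> nat) (M N : 'X_{1..Nv m}) :
  Pcal K m a b M N = ('X_[P1 m a b M N] - 'X_[P2 m a b M N])%R.
Proof. by []. Qed.

Lemma co_mnm (m : nat) (E : 'I_(Nv m) -> nat) (k : nat) : (k < Nv m)%N ->
  co [multinom E i | i < Nv m] k = E (inord k).
Proof. by move=> hk; rewrite /co mnmE. Qed.

Lemma coD (m : nat) (u v : 'X_{1..Nv m}) (k : nat) : co (u + v)%MM k = (co u k + co v k)%N.
Proof. by rewrite /co mnmDE. Qed.

Lemma coB (m : nat) (u v : 'X_{1..Nv m}) (k : nat) : co (u - v)%MM k = (co u k - co v k)%N.
Proof. by rewrite /co mnmBE. Qed.

Lemma co_psiE (m : nat) (a b : nat -> nat) (M : 'X_{1..Nv m}) (k : nat) : (k < Nv m)%N ->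
  co (psiE m a b M) k = psiC m a b M k.
Proof.
move=> hk; rewrite /psiE co_mnm // /psiC inordK //.
by case: ifP => // _; rewrite ordmax_inord.
Qed.

Lemma coP1 (m : nat) (a b : nat -> nat) (M N : 'X_{1..Nv m}) (k : nat) : (k < Nv m)%N ->
  co (P1 m a b M N) k = (co M k + (psiC m a b N k - minn (psiC m a b M k) (psiC m a b N k)))%N.
Proof. by move=> hk; rewrite /P1 co_mnm // -!co_psiE //. Qed.

Lemma coP2 (m : nat) (a b : nat -> nat) (M N : 'X_{1..Nv m}) (k : nat) : (k < Nv m)%N ->
  co (P2 m a b M N) k = (co N k + (psiC m a b M k - minn (psiC m a b M k) (psiC m a b N k)))%N.
Proof. by move=> hk; rewrite /P2 co_mnm // -!co_psiE //. Qed.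

Lemma phiE_T (m : nat) (a b : nat -> nat) (u : 'X_{1..Nv m}) (i : nat) : (i < m)%N ->
  phiE m a b u (inord i) = (co u i + a i * co u (m + i) + b i * co u (m + m))%N.
Proof. by move=> hi; rewrite /phiE mnmE inordK ?hi //; lia. Qed.

Lemma phiE_Z (m : nat) (a b : nat -> nat) (u : 'X_{1..Nv m}) :
  phiE m a b u ord_max = Zs m u.
Proof. by rewrite /phiE mnmE /= ltnn. Qed.

Lemma phiE_eq (m : nat) (a b : nat -> nat) (u v : 'X_{1..Nv m}) :
  (forall i, (i < m)%N -> (co u i + a i * co u (m + i) + b i * co u (m + m) =
                          co v i + a i * co v (m + i) + b i * co v (m + m))%N) ->
  Zs m u = Zs m v -> phiE m a b u = phiE m a b v.
Proof.
move=> hT hZ; apply/mnmP => i; rewrite /phiE !mnmE; case: ifP => hi; first exact: hT.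
exact: hZ.
Qed.

Lemma phiE_inv (m : nat) (a b : nat -> nat) (u v : 'X_{1..Nv m}) :
  phiE m a b u = phiE m a b v ->
  (forall i, (i < m)%N -> (co u i + a i * co u (m + i) + b i * co u (m + m) =
                          co v i + a i * co v (m + i) + b i * co v (m + m))%N) /\
  Zs m u = Zs m v.
Proof.
move=> e; split; last by rewrite -(phiE_Z m a b u) -(phiE_Z m a b v) e.
by move=> i hi; rewrite -!phiE_T // e.
Qed.

Lemma phiE_add (m : nat) (a b : nat -> nat) (u v : 'X_{1..Nv m}) :
  phiE m a b (u + v)%MM = (phiE m a b u + phiE m a b v)%MM.
Proof.
apply/mnmP => i; rewrite mnmDE /phiE !mnmE; case: ifP => hi.
  rewrite !coD; lia.
rewrite !coD !big_nat; under eq_bigr do rewrite coD. rewrite big_split /=; lia.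
Qed.

Lemma mu_add (m : nat) (u v : 'X_{1..Nv m}) : mu m (u + v)%MM = (mu m u + mu m v)%N.
Proof.
rewrite /mu (eq_big_nat _ _ (F1 := fun j => j.+1 * co (u + v)%MM (m + j))
   (F2 := fun j => j.+1 * co u (m + j) + j.+1 * co v (m + j)))%N; last first.
  by move=> j _; rewrite coD mulnDr.
rewrite big_split /= coD; lia.
Qed.

Lemma degXW_Zs (m : nat) (u : 'X_{1..Nv m}) : degXW m u = Zs m u.
Proof.
rewrite /degXW /Zs.
rewrite (eq_bigr (fun i : 'I_(Nv m) => co u i)); last by move=> i _; rewrite /co inord_val.
rewrite big_mkcond /=.
rewrite -(big_mkord xpredT (fun i => if (m <= i)%N then co u i else 0%N)) /Nv big_nat_recr //=.
rewrite leq_addr (big_cat_nat _ (n := m)) //=; last by lia.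
rewrite big_nat big1 ?add0n; last first.
  by move=> i /andP[_ hi]; rewrite leqNgt hi.
rewrite sum_shift; congr (_ + _)%N; apply: eq_big_nat => j _.
by rewrite leq_addl addnC.
Qed.

Lemma co_split (m : nat) (P : nat -> Prop) :
  (forall t, (t < m)%N -> P t) -> (forall t, (t < m)%N -> P (m + t)%N) -> P (m + m)%N ->
  forall k, (k < Nv m)%N -> P k.
Proof.
move=> h1 h2 h3 k hk; rewrite /Nv in hk.
case: (ltnP k m) => hkm; first exact: h1.
case: (ltnP k (m + m)) => hk2.
  have -> : k = (m + (k - m))%N by lia.
  by apply: h2; lia.
by have -> : k = (m + m)%N by lia.
Qed.

Lemma psiC_ge (m : nat) (a b : nat -> nat) (M : 'X_{1..Nv m}) (k : nat) :
  (m <= k)%N -> psiC m a b M k = 0%N.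
Proof. by move=> h; rewrite /psiC ltnNge h. Qed.

Lemma coP1_ge (m : nat) (a b : nat -> nat) (M N : 'X_{1..Nv m}) (k : nat) :
  (m <= k)%N -> (k < Nv m)%N -> co (P1 m a b M N) k = co M k.
Proof. by move=> h hk; rewrite coP1 // !psiC_ge // sub0n addn0. Qed.

Lemma coP2_ge (m : nat) (a b : nat -> nat) (M N : 'X_{1..Nv m}) (k : nat) :
  (m <= k)%N -> (k < Nv m)%N -> co (P2 m a b M N) k = co N k.
Proof. by move=> h hk; rewrite coP2 // !psiC_ge // sub0n addn0. Qed.

Lemma Zs_ext (m : nat) (u v : 'X_{1..Nv m}) :
  (forall t, (t <= m)%N -> co u (m + t) = co v (m + t)) -> Zs m u = Zs m v.
Proof.
move=> h; rewrite /Zs h //; congr (_ + _)%N; apply: eq_big_nat => j /andP[_ hj]; apply: h; lia.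
Qed.

Lemma mu_ext (m : nat) (u v : 'X_{1..Nv m}) :
  (forall t, (t <= m)%N -> co u (m + t) = co v (m + t)) -> mu m u = mu m v.
Proof.
move=> h; rewrite /mu h //; congr (_ + _)%N; apply: eq_big_nat => j /andP[_ hj]; rewrite h //; lia.
Qed.

Lemma ZsP1 (m : nat) (a b : nat -> nat) (M N : 'X_{1..Nv m}) : Zs m (P1 m a b M N) = Zs m M.
Proof. by apply: Zs_ext => t ht; rewrite coP1_ge /Nv; lia. Qed.
Lemma ZsP2 (m : nat) (a b : nat -> nat) (M N : 'X_{1..Nv m}) : Zs m (P2 m a b M N) = Zs m N.
Proof. by apply: Zs_ext => t ht; rewrite coP2_ge /Nv; lia. Qed.
Lemma muP1 (m : nat) (a b : nat -> nat) (M N : 'X_{1..Nv m}) : mu m (P1 m a b M N) = mu m M.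
Proof. by apply: mu_ext => t ht; rewrite coP1_ge /Nv; lia. Qed.
Lemma muP2 (m : nat) (a b : nat -> nat) (M N : 'X_{1..Nv m}) : mu m (P2 m a b M N) = mu m N.
Proof. by apply: mu_ext => t ht; rewrite coP2_ge /Nv; lia. Qed.

Lemma P_phi (m : nat) (a b : nat -> nat) (M N : 'X_{1..Nv m}) :
  (forall t, (t < m)%N -> co M t = 0%N /\ co N t = 0%N) -> Zs m M = Zs m N ->
  phiE m a b (P1 m a b M N) = phiE m a b (P2 m a b M N).
Proof.
move=> h0 hZ; apply: phiE_eq; last by rewrite ZsP1 ZsP2.
move=> i hi; have [h1 h2] := h0 i hi.
have hN : forall k, (m <= k)%N -> (k < Nv m)%N -> co (P1 m a b M N) k = co M k /\ co (P2 m a b M N) k = co N k.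
  by move=> k hk1 hk2; rewrite coP1_ge ?coP2_ge.
have [e1 e2] := hN (m + i)%N (leq_addr _ _) (ltac:(rewrite /Nv; lia)).
have [e3 e4] := hN (m + m)%N (leq_addr _ _) (ltac:(rewrite /Nv; lia)).
rewrite e1 e2 e3 e4 coP1 ?coP2; try (rewrite /Nv; lia).
rewrite h1 h2 /psiC hi; lia.
Qed.

Lemma co_XW (m : nat) (i : 'I_m.+1) (k : nat) : (k < Nv m)%N ->
  co (XWvar m i) k = nat_of_bool (k == m + i)%N.
Proof. by move=> hk; rewrite /XWvar co_mnm // inordK. Qed.

Lemma co_Wpow (m : nat) (c : nat -> nat) (k : nat) : (k < Nv m)%N ->
  co (Wpow m c) k = (if k == m + m then \sum_(0 <= j < m) c j else 0)%N.
Proof. by move=> hk; rewrite /Wpow co_mnm // inordK // big_mkord. Qed.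

Lemma co_Xpow (m : nat) (c : nat -> nat) (k : nat) : (k < Nv m)%N ->
  co (Xpow m c) k = (if (m <= k < m + m)%N then c (k - m) else 0)%N.
Proof. by move=> hk; rewrite /Xpow co_mnm // inordK. Qed.

Definition good (K : fieldType) (m : nat) (a b : nat -> nat) (u : 'X_{1..Nv m})
   (g : {mpoly K[Nv m]}) (Mg Ng : 'X_{1..Nv m}) : Prop :=
  (Gamma0 K m a b g \/ Gamma3 K m a b g) /\ g = ('X_[Mg] - 'X_[Ng])%R /\ tau_lt m Ng Mg /\
      phiE m a b Mg = phiE m a b Ng /\ (mu m Ng < mu m Mg)%N /\
      (forall k, (k < Nv m)%N -> co Mg k <= co u k)%N /\
      ((1 <= degXW m Mg <= \sum_(j < m) b j)%N /\ degXW m Ng = degXW m Mg).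

Lemma XW_facts (m : nat) (i : nat) : (i <= m)%N ->
  [/\ forall t, (t < m)%N -> co (XWvar m (inord i)) t = 0%N,
      Zs m (XWvar m (inord i)) = 1%N & mu m (XWvar m (inord i)) = i.+1].
Proof.
move=> hi.
have hc : forall k, (k < Nv m)%N -> co (XWvar m (inord i)) k = nat_of_bool (k == m + i)%N.
  by move=> k hk; rewrite co_XW // inordK.
split.
- move=> t ht; rewrite hc; last by rewrite /Nv; lia.
  by rewrite (_ : (t == m + i)%N = false) //; apply/negbTE; rewrite neq_ltn; apply/orP; left; lia.
- rewrite /Zs hc; last by rewrite /Nv; lia.
  rewrite (eq_big_nat _ _ (F1 := fun j => co (XWvar m (inord i)) (m + j))
       (F2 := fun j => nat_of_bool (j == i) * 1))%N; last first.
    by move=> j /andP[_ hj]; rewrite hc ?eqn_add2l ?muln1 //; rewrite /Nv; lia.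
  rewrite eqn_add2l; case: (ltnP i m) => him.
    have hmi : (m == i) = false by apply/negbTE; rewrite neq_ltn him orbT.
    by rewrite sum_delta // hmi ?muln0 ?addn0.
  have -> : i = m by lia.
  rewrite eqxx big_nat big1 // => j /andP[_ hj].
  by rewrite (_ : (j == m) = false) //; apply/negbTE; rewrite neq_ltn hj.
- rewrite /mu hc; last by rewrite /Nv; lia.
  rewrite (eq_big_nat _ _ (F1 := fun j => j.+1 * co (XWvar m (inord i)) (m + j))
       (F2 := fun j => nat_of_bool (j == i) * j.+1))%N; last first.
    move=> j /andP[_ hj]; rewrite hc ?eqn_add2l; [by rewrite mulnC | rewrite /Nv; lia].
  rewrite eqn_add2l; case: (ltnP i m) => him.
    have hmi : (m == i) = false by apply/negbTE; rewrite neq_ltn him orbT.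
    by rewrite sum_delta // hmi ?muln0 ?addn0.
  have -> : i = m by lia.
  rewrite eqxx big_nat big1 ?muln1 // => j /andP[_ hj].
  by rewrite (_ : (j == m) = false) //; apply/negbTE; rewrite neq_ltn hj.
Qed.


Ltac nv := rewrite /Nv; lia.

Lemma XW_co (m i t : nat) : (i <= m)%N -> (t <= m)%N ->
  co (XWvar m (inord i)) (m + t) = nat_of_bool (t == i).
Proof. by move=> hi ht; rewrite co_XW ?inordK ?eqn_add2l //; nv. Qed.

Lemma kindA (K : fieldType) (m : nat) (a b : nat -> nat) (u : 'X_{1..Nv m}) (i j : nat) :
  (1 <= \sum_(j < m) b j)%N -> (j < i)%N -> (i < m)%N -> (a j <= co u j)%N -> (1 <= co u (m + i))%N ->
  good K m a b u (Pcal K m a b (XWvar m (inord i)) (XWvar m (inord j)))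
    (P1 m a b (XWvar m (inord i)) (XWvar m (inord j))) (P2 m a b (XWvar m (inord i)) (XWvar m (inord j))).
Proof.
move=> hB hji him hu1 hu2.
set M := XWvar m (inord i); set N := XWvar m (inord j).
have hjm : (j < m)%N by lia.
have [Mi1 Mi2 Mi3] := XW_facts m i (ltnW him).
have [Nj1 Nj2 Nj3] := XW_facts m j (ltnW hjm).
have MX : forall t, (t <= m)%N -> co M (m + t) = nat_of_bool (t == i) by move=> t ht; apply: XW_co; lia.
have NX : forall t, (t <= m)%N -> co N (m + t) = nat_of_bool (t == j) by move=> t ht; apply: XW_co; lia.
have mi : (m == i) = false by apply/negbTE; rewrite neq_ltn him orbT.
have mj : (m == j) = false by apply/negbTE; rewrite neq_ltn hjm orbT.
have e1 : forall t, (t <= m)%N -> co (P1 m a b M N) (m + t) = co M (m + t).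
  by move=> t ht; apply: coP1_ge; [lia|nv].
have e2 : forall t, (t <= m)%N -> co (P2 m a b M N) (m + t) = co N (m + t).
  by move=> t ht; apply: coP2_ge; [lia|nv].
split.
  left; exists (inord i), (inord j); split => //; rewrite !inordK //; lia.
split; first by rewrite PcalE.
split.
  apply: (tau_lt_X _ _ _ i); [|exact: him| |].
  + by rewrite e1 ?e2 ?MX ?NX // mi mj.
  + rewrite e1 ?e2 ?MX ?NX; lia.
  + move=> k /andP[hk1 hk2]; rewrite e1 ?e2 ?MX ?NX; lia.
split.
  apply: P_phi; last by rewrite Mi2 Nj2.
  by move=> t ht; rewrite Mi1 ?Nj1.
split; first by rewrite muP1 muP2 Mi3 Nj3.
split.
  apply: co_split.
  + move=> t ht; rewrite coP1; last by nv.
    rewrite Mi1 // add0n /psiC ht MX ?NX ?MX; try lia.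
    rewrite mi mj; case: (t =P j) => [e|hne]; first by subst t; lia.
    lia.
  + move=> t ht; rewrite e1 ?MX; try lia.
    by case: (t =P i) => [->|].
  + by rewrite e1 // MX // mi.
rewrite !degXW_Zs ZsP1 ZsP2 Mi2 Nj2; split => //; lia.
Qed.

Lemma kindB (K : fieldType) (m : nat) (a b : nat -> nat) (u : 'X_{1..Nv m}) (j : nat) :
  (1 <= \sum_(j < m) b j)%N -> (j < m)%N -> (b j < a j)%N -> (a j - b j <= co u j)%N ->
  (1 <= co u (m + m))%N ->
  good K m a b u (Pcal K m a b (XWvar m (inord m)) (XWvar m (inord j)))
    (P1 m a b (XWvar m (inord m)) (XWvar m (inord j))) (P2 m a b (XWvar m (inord m)) (XWvar m (inord j))).
Proof.
move=> hB hjm hbaj hu1 hu2.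
set M := XWvar m (inord m); set N := XWvar m (inord j).
have [Mi1 Mi2 Mi3] := XW_facts m m (leqnn m).
have [Nj1 Nj2 Nj3] := XW_facts m j (ltnW hjm).
have MX : forall t, (t <= m)%N -> co M (m + t) = nat_of_bool (t == m) by move=> t ht; apply: XW_co; lia.
have NX : forall t, (t <= m)%N -> co N (m + t) = nat_of_bool (t == j) by move=> t ht; apply: XW_co; lia.
have e1 : forall t, (t <= m)%N -> co (P1 m a b M N) (m + t) = co M (m + t).
  by move=> t ht; apply: coP1_ge; [lia|nv].
have e2 : forall t, (t <= m)%N -> co (P2 m a b M N) (m + t) = co N (m + t).
  by move=> t ht; apply: coP2_ge; [lia|nv].
split.
  left; exists (inord m), (inord j); split => //; rewrite !inordK //; lia.
split; first by rewrite PcalE.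
split.
  apply: tau_lt_W; rewrite e1 ?e2 ?MX ?NX //; lia.
split.
  apply: P_phi; last by rewrite Mi2 Nj2.
  by move=> t ht; rewrite Mi1 ?Nj1.
split; first by rewrite muP1 muP2 Mi3 Nj3; lia.
split.
  apply: co_split.
  + move=> t ht; rewrite coP1; last by nv.
    rewrite Mi1 // add0n /psiC ht MX ?NX ?MX; try lia.
    case: (t =P j) => [e|hne]; first by subst t; lia.
    lia.
  + move=> t ht; rewrite e1 ?MX; lia.
  + by rewrite e1 // MX // eqxx.
rewrite !degXW_Zs ZsP1 ZsP2 Mi2 Nj2; split => //; lia.
Qed.

Lemma sum_ge_term (m i : nat) (F : nat -> nat) : (i < m)%N -> (F i <= \sum_(0 <= j < m) F j)%N.
Proof.
move=> hi; rewrite (big_cat_nat _ (n := i)) //=; last exact: ltnW.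
rewrite (big_ltn hi); lia.
Qed.

Lemma kindC (K : fieldType) (m : nat) (a b : nat -> nat) (u : 'X_{1..Nv m}) (c : nat -> nat) :
  (exists i, (i < m)%N /\ c i <> 0%N) -> (forall i, (i < m)%N -> (c i <= b i)%N) ->
  (\sum_(0 <= j < m) c j <= co u (m + m))%N ->
  (forall i, (i < m)%N -> (a i * c i - (\sum_(0 <= j < m) c j) * b i <= co u i)%N) ->
  good K m a b u (Pcal K m a b (Wpow m c) (Xpow m c))
    (P1 m a b (Wpow m c) (Xpow m c)) (P2 m a b (Wpow m c) (Xpow m c)).
Proof.
move=> hc0 hcb hw hT.
set M := Wpow m c; set N := Xpow m c; set k := (\sum_(0 <= j < m) c j)%N.
have hk1 : (1 <= k)%N.
  case: hc0 => i [hi hci]; have := sum_ge_term m i c hi; rewrite -/k; lia.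
have MT : forall t, (t < m)%N -> co M t = 0%N.
  by move=> t ht; rewrite co_Wpow; [|nv]; case: ifP => //; lia.
have NT : forall t, (t < m)%N -> co N t = 0%N.
  by move=> t ht; rewrite co_Xpow; [|nv]; case: ifP => //; lia.
have MX : forall t, (t < m)%N -> co M (m + t) = 0%N.
  by move=> t ht; rewrite co_Wpow; [|nv]; case: ifP => //; lia.
have NX : forall t, (t < m)%N -> co N (m + t) = c t.
  by move=> t ht; rewrite co_Xpow; [|nv]; case: ifP => h; [rewrite addKn|lia].
have MW : co M (m + m) = k by rewrite co_Wpow ?eqxx //; nv.
have NW : co N (m + m) = 0%N by rewrite co_Xpow; [|nv]; case: ifP => //; lia.
have ZM : Zs m M = k.
  rewrite /Zs MW big_nat big1 // => t /andP[_ ht]; exact: MX.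
have ZN : Zs m N = k.
  rewrite /Zs NW addn0 /k; apply: eq_big_nat => t /andP[_ ht]; exact: NX.
have e1 : forall t, (t <= m)%N -> co (P1 m a b M N) (m + t) = co M (m + t).
  by move=> t ht; apply: coP1_ge; [lia|nv].
have e2 : forall t, (t <= m)%N -> co (P2 m a b M N) (m + t) = co N (m + t).
  by move=> t ht; apply: coP2_ge; [lia|nv].
split.
  right; exists c; split => //; split => //.
split; first by rewrite PcalE.
split.
  apply: tau_lt_W; rewrite e1 ?e2 ?MW ?NW //.
split.
  apply: P_phi; last by rewrite ZM ZN.
  by move=> t ht; rewrite MT ?NT.
split.
  rewrite muP1 muP2 /mu MW NW muln0 addn0.
  have -> : (\sum_(0 <= j < m) j.+1 * co M (m + j) = 0)%N.
    by rewrite big_nat big1 // => t /andP[_ ht]; rewrite MX ?muln0.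
  rewrite add0n.
  have : (\sum_(0 <= j < m) j.+1 * co N (m + j) <= \sum_(0 <= j < m) m * c j)%N.
    by apply: sum_le => t ht; rewrite NX //; apply: leq_mul => //.
  rewrite -big_distrr /= -/k; nia.
split.
  apply: co_split.
  + move=> t ht; rewrite coP1; last by nv.
    rewrite MT // add0n /psiC ht MW NW MX ?NX //.
    have := hT t ht; rewrite -/k; lia.
  + move=> t ht; rewrite e1 ?MX; lia.
  + by rewrite e1 // MW.
rewrite !degXW_Zs ZsP1 ZsP2 ZM ZN; split => //.
rewrite hk1 /= /k -(big_mkord xpredT b).
by apply: sum_le.
Qed.

Lemma exists_good (K : fieldType) (m : nat) (a b : nat -> nat)
  (hba : forall i, (i < m)%N -> (b i < a i)%N)
  (hB : (1 <= \sum_(j < m) b j)%N)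
  (hbmin : forall i, (i < m)%N -> (\sum_(j < m) b j <= a i)%N)
  (u v : 'X_{1..Nv m}) :
  phiE m a b u = phiE m a b v -> tau_lt m v u ->
  exists g Mg Ng, good K m a b u g Mg Ng.
Proof.
move=> e hlt.
have [hT hZ] := phiE_inv m a b u v e.
rewrite /Zs in hZ.
have hB' : (0 < \sum_(0 <= j < m) b j)%N by rewrite big_mkord.
have hbmin' : forall i, (i < m)%N -> (\sum_(0 <= j < m) b j <= a i)%N.
  by move=> i hi; rewrite big_mkord; apply: hbmin.
case: (tau_ltP m v u hlt) => [hw | [[hW [i [hi hl heq]]] | [hW [hX [i [hi hl]]]]]].
- have [[j [hj hj2]] | [c [hc0 [hcb [hcw hcT]]]]] :=
    core_W m a b (co u) (fun i => co u (m + i)) (co v) (fun i => co v (m + i))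
      (co u (m + m)) (co v (m + m)) hba hB' hbmin' hT hZ hw.
  + do 3 eexists; apply: (kindB K m a b u j) => //; [exact: hba | lia].
  + do 3 eexists; apply: (kindC K m a b u c) => //.
- have hT' : forall i, (i < m)%N -> (co u i + a i * co u (m + i) + b i * co u (m + m) =
                          co v i + a i * co v (m + i) + b i * co u (m + m))%N.
    by move=> k hk; have := hT k hk; rewrite hW.
  have hZ' : (\sum_(0 <= j < m) co u (m + j) + co u (m + m) =
              \sum_(0 <= j < m) co v (m + j) + co u (m + m))%N by have := hZ; rewrite hW.
  have [j [hji hj]] := core_X m a b (co u) (fun i => co u (m + i)) (co v) (fun i => co v (m + i))
      (co u (m + m)) i hT' hZ' hi hl heq.
  do 3 eexists; apply: (kindA K m a b u i j) => //; lia.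
- have := hT i hi; rewrite hX // hW; lia.
Qed.

Import GRing.Theory.
Local Open Scope ring_scope.

Lemma binom_inL (K : fieldType) (m : nat) (a b : nat -> nat) (M N : 'X_{1..Nv m}) :
  phiE m a b M = phiE m a b N -> inL K m a b ('X_[M] - 'X_[N]).
Proof. by move=> e; rewrite /inL comp_mpolyB !comp_X e subrr. Qed.

Lemma good_inL (K : fieldType) (m : nat) (a b : nat -> nat) u g Mg Ng :
  good K m a b u g Mg Ng -> inL K m a b g.
Proof. by case=> [_ [-> [_ [e _]]]]; apply: binom_inL. Qed.

Lemma msupp_binom (K : fieldType) (n : nat) (M N : 'X_{1..n}) :
  M != N -> {subset msupp ('X_[M] - 'X_[N] : {mpoly K[n]}) <= [:: M; N]} /\
            M \in msupp ('X_[M] - 'X_[N] : {mpoly K[n]}).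
Proof.
move=> hne; split.
  move=> x /msuppB_le; rewrite mem_cat !msuppX !inE => /orP[->|->] //; by rewrite orbT.
have hne2 : (N == M) = false by apply/negbTE; rewrite eq_sym.
by rewrite mcoeff_msupp mcoeffB !mcoeffX eqxx hne2 subr0 oner_eq0.
Qed.

Lemma good_lm (K : fieldType) (m : nat) (a b : nat -> nat) u g Mg Ng :
  good K m a b u g Mg Ng -> g != 0 /\ is_lm K m g Mg.
Proof.
case=> [_ [-> [hlt _]]].
have hne : Mg != Ng by apply/eqP => e; move: hlt; rewrite e tau_lt_irr.
have [hs hin] := msupp_binom K _ _ _ hne.
split.
  by apply/eqP => e; move: hin; rewrite e msupp0.
rewrite /is_lm hin /=; apply/allP => x /hs; rewrite !inE => /orP[->|/eqP ->] //.
by rewrite hlt orbT.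
Qed.

Lemma good_homog (K : fieldType) (m : nat) (a b : nat -> nat) u g Mg Ng :
  good K m a b u g Mg Ng ->
  exists d, [/\ (1 <= d)%N, (d <= \sum_(j < m) b j)%N & homogXW K m d g].
Proof.
case=> [_ [eg [hlt [_ [_ [_ [hd1 hd2]]]]]]].
have hne : Mg != Ng by apply/eqP => e; move: hlt; rewrite e tau_lt_irr.
have [hs _] := msupp_binom K _ _ _ hne.
exists (degXW m Mg); move: hd1 => /andP[h1 h2]; split => //.
rewrite /homogXW eg; apply/allP => x /hs; rewrite !inE => /orP[/eqP ->|/eqP ->] //.
by rewrite hd2.
Qed.

Lemma fiber (K : fieldType) (m : nat) (a b : nat -> nat) (f : {mpoly K[Nv m]}) (u : 'X_{1..Nv m}) :
  inL K m a b f -> u \in msupp f ->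
  exists v, [/\ v \in msupp f, v != u & phiE m a b v = phiE m a b u].
Proof.
move=> hf hu; apply: NNPP => hn.
have hall : forall v, v \in msupp f -> v != u -> phiE m a b v != phiE m a b u.
  move=> v hv hvu; apply/eqP => e; apply: hn; exists v; split => //.
move: hf; rewrite /inL comp_mpolyEX => /(congr1 (mcoeff (phiE m a b u))).
rewrite mcoeff0 raddf_sum /=.
rewrite (bigD1_seq u hu (msupp_uniq f)) /=.
rewrite mcoeffZ comp_X mcoeffX eqxx mulr1 big1 ?addr0.
  by move=> e; move: hu; rewrite mcoeff_msupp e eqxx.
move=> v hvu; rewrite mcoeffZ comp_X mcoeffX.
case: (boolP (v \in msupp f)) => hv.
  by rewrite (negbTE (hall v hv hvu)) mulr0.
by rewrite (memN_msupp_eq0 hv) mul0r.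
Qed.

Lemma max_seq (m : nat) (s : seq 'X_{1..Nv m}) : s != [::] ->
  exists x, x \in s /\ all (fun y => (y == x) || tau_lt m y x) s.
Proof.
elim: s => [//|x s IH] _.
case: s IH => [|y s] IH.
  by exists x; split; [exact: mem_head | rewrite /= eqxx].
have [z [hz hall]] := IH isT.
move/allP: hall => hall.
case: (eqVneq x z) => [exz|nxz].
  subst z; exists x; split; first exact: mem_head.
  apply/allP => y'; rewrite inE => /orP[/eqP ->|hy']; first by rewrite eqxx.
  exact: hall.
case: (tau_total m x z (elimN eqP nxz)) => hxz.
  exists z; split; first by rewrite inE hz orbT.
  apply/allP => y'; rewrite inE => /orP[/eqP ->|hy']; first by rewrite hxz orbT.
  exact: hall.
exists x; split; first exact: mem_head.
apply/allP => y'; rewrite inE => /orP[/eqP ->|hy']; first by rewrite eqxx.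
move: (hall y' hy') => /orP[/eqP ->|h].
  by rewrite hxz orbT.
by rewrite (tau_lt_trans _ _ _ _ h hxz) orbT.
Qed.

Inductive Gen (K : fieldType) (m : nat) (a b : nat -> nat) : {mpoly K[Nv m]} -> Prop :=
| Gen0 : Gen K m a b 0
| GenS : forall h g f, (exists u Mg Ng, good K m a b u g Mg Ng) -> Gen K m a b f ->
    Gen K m a b (h * g + f).

Lemma GenD (K : fieldType) (m : nat) (a b : nat -> nat) f1 f2 :
  Gen K m a b f1 -> Gen K m a b f2 -> Gen K m a b (f1 + f2).
Proof.
elim=> [|h g f0 hg _ IH] h2; first by rewrite add0r.
by rewrite -addrA; apply: GenS => //; apply: IH.
Qed.

Lemma GenM (K : fieldType) (m : nat) (a b : nat -> nat) p f :
  Gen K m a b f -> Gen K m a b (p * f).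
Proof.
elim=> [|h g f0 hg _ IH]; first by rewrite mulr0; exact: Gen0.
by rewrite mulrDr mulrA; apply: GenS.
Qed.

Lemma sub_add_mnm (n : nat) (u M : 'X_{1..n}) :
  (forall i, M i <= u i)%N -> ((u - M) + M)%MM = u.
Proof. by move=> h; apply/mnmP => i; rewrite mnmDE mnmBE subnK. Qed.

Lemma binom_step (K : fieldType) (m : nat) (a b : nat -> nat)
  (hba : forall i, (i < m)%N -> (b i < a i)%N)
  (hB : (1 <= \sum_(j < m) b j)%N)
  (hbmin : forall i, (i < m)%N -> (\sum_(j < m) b j <= a i)%N)
  (u v : 'X_{1..Nv m}) :
  phiE m a b u = phiE m a b v -> tau_lt m v u ->
  (forall u' v', (mu m u' + mu m v' < mu m u + mu m v)%N -> phiE m a b u' = phiE m a b v' ->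
      Gen K m a b ('X_[u'] - 'X_[v'])) ->
  Gen K m a b ('X_[u] - 'X_[v]).
Proof.
move=> e hlt IH.
have [g [Mg [Ng hg]]] := exists_good K m a b hba hB hbmin u v e hlt.
have hg' := hg; case: hg' => [_ [eg [_ [ephi [hmu [hdiv _]]]]]].
set r := (u - Mg)%MM.
have hu : (r + Mg)%MM = u.
  apply: sub_add_mnm => i; have := hdiv i (ltn_ord i); by rewrite /co inord_val.
have -> : 'X_[u] - 'X_[v] = 'X_[r] * g + ('X_[r + Ng] - 'X_[v]).
  rewrite eg mulrBr -!mpolyXD hu; rewrite addrA subrK //.
apply: GenS; first by exists u, Mg, Ng.
apply: IH.
  by rewrite mu_add -hu mu_add; lia.
by rewrite phiE_add -ephi -phiE_add hu.
Qed.

Lemma binom_gen (K : fieldType) (m : nat) (a b : nat -> nat)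
  (hba : forall i, (i < m)%N -> (b i < a i)%N)
  (hB : (1 <= \sum_(j < m) b j)%N)
  (hbmin : forall i, (i < m)%N -> (\sum_(j < m) b j <= a i)%N) :
  forall n (u v : 'X_{1..Nv m}), (mu m u + mu m v < n)%N -> phiE m a b u = phiE m a b v ->
  Gen K m a b ('X_[u] - 'X_[v]).
Proof.
elim=> [//|n IH] u v hn e.
case: (eqVneq u v) => [->|huv]; first by rewrite subrr; exact: Gen0.
case: (tau_total m u v (elimN eqP huv)) => hlt.
  have -> : 'X_[u] - 'X_[v] = -1 * ('X_[v] - 'X_[u]) :> {mpoly K[Nv m]}.
    by rewrite mulN1r opprB.
  apply: GenM; apply: (binom_step K m a b hba hB hbmin v u) => //.
  move=> u' v' h1 h2; apply: IH => //; lia.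
apply: (binom_step K m a b hba hB hbmin u v) => //.
move=> u' v' h1 h2; apply: IH => //; lia.
Qed.

Lemma L_gen (K : fieldType) (m : nat) (a b : nat -> nat)
  (hba : forall i, (i < m)%N -> (b i < a i)%N)
  (hB : (1 <= \sum_(j < m) b j)%N)
  (hbmin : forall i, (i < m)%N -> (\sum_(j < m) b j <= a i)%N) :
  forall n (f : {mpoly K[Nv m]}), (size (msupp f) <= n)%N -> inL K m a b f -> Gen K m a b f.
Proof.
elim=> [|n IH] f hs hf.
  have : msupp f == [::] by rewrite -size_eq0 -leqn0.
  by rewrite msupp_eq0 => /eqP ->; exact: Gen0.
case: (eqVneq f 0) => [->|hf0]; first exact: Gen0.
have hne : msupp f != [::] by rewrite msupp_eq0.
case E: (msupp f) hne => [//|u s] _.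
have hu : u \in msupp f by rewrite E mem_head.
have [v [hv hvu ephi]] := fiber K m a b f u hf hu.
set c := f@_u.
set f' := f - c *: ('X_[u] - 'X_[v]).
have hf' : inL K m a b f'.
  move: hf; rewrite /inL /f' comp_mpolyB comp_mpolyZ comp_mpolyB !comp_X ephi subrr scaler0.
  by move=> ->; rewrite subr0.
have hsub : {subset msupp f' <= rem u (msupp f)}.
  move=> x; rewrite (mem_rem_uniq _ (msupp_uniq f)) inE.
  rewrite mcoeff_msupp /f' mcoeffB mcoeffZ mcoeffB !mcoeffX => hx.
  case: (eqVneq u x) => [exu|nux].
    subst x; move: hx; rewrite eqxx (negbTE hvu) subr0 mulr1 /c subrr eqxx //.
  rewrite /=.
  case: (eqVneq v x) => [<-|nvx] //.
  move: hx; rewrite (negbTE nux) (negbTE nvx) subrr mulr0 subr0.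
  by rewrite -mcoeff_msupp.
have hsz : (size (msupp f') <= n)%N.
  have := uniq_leq_size (msupp_uniq f') hsub; rewrite size_rem ?hu //.
  by rewrite E /= in hs *; lia.
have -> : f = c%:MP * ('X_[u] - 'X_[v]) + f' by rewrite mul_mpolyC /f' addrC subrK.
apply: GenD; last exact: IH.
by apply: GenM; apply: (binom_gen K m a b hba hB hbmin (mu m u + mu m v).+1).
Qed.

Lemma Pcal_inL (K : fieldType) (m : nat) (a b : nat -> nat) (M N : 'X_{1..Nv m}) :
  (forall t, (t < m)%N -> co M t = 0%N /\ co N t = 0%N) -> Zs m M = Zs m N ->
  inL K m a b (Pcal K m a b M N).
Proof. by move=> h1 h2; rewrite PcalE; apply: binom_inL; apply: P_phi. Qed.

Lemma Gamma_inL (K : fieldType) (m : nat) (a b : nat -> nat) (g : {mpoly K[Nv m]}) :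
  Gamma0 K m a b g \/ Gamma3 K m a b g -> inL K m a b g.
Proof.
case=> [[i [j [hji ->]]]|[c [_ [_ ->]]]].
  rewrite -(inord_val i) -(inord_val j).
  have [Mi1 Mi2 _] := XW_facts m i (ltn_ord i).
  have [Nj1 Nj2 _] := XW_facts m j (ltn_ord j).
  by apply: Pcal_inL; [move=> t ht; rewrite Mi1 ?Nj1 | rewrite Mi2 Nj2].
have MT : forall t, (t < m)%N -> co (Wpow m c) t = 0%N.
  by move=> t ht; rewrite co_Wpow; [|nv]; case: ifP => //; lia.
have NT : forall t, (t < m)%N -> co (Xpow m c) t = 0%N.
  by move=> t ht; rewrite co_Xpow; [|nv]; case: ifP => //; lia.
have MX : forall t, (t < m)%N -> co (Wpow m c) (m + t) = 0%N.
  by move=> t ht; rewrite co_Wpow; [|nv]; case: ifP => //; lia.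
have NX : forall t, (t < m)%N -> co (Xpow m c) (m + t) = c t.
  by move=> t ht; rewrite co_Xpow; [|nv]; case: ifP => h; [rewrite addKn|lia].
have MW : co (Wpow m c) (m + m) = (\sum_(0 <= j < m) c j)%N by rewrite co_Wpow ?eqxx //; nv.
have NW : co (Xpow m c) (m + m) = 0%N by rewrite co_Xpow; [|nv]; case: ifP => //; lia.
apply: Pcal_inL; first by move=> t ht; rewrite MT ?NT.
rewrite /Zs MW NW addn0 big_nat big1 ?add0n; last by move=> t /andP[_ ht]; exact: MX.
by rewrite !big_nat; apply: eq_bigr => t /andP[_ ht]; rewrite NX.
Qed.

Lemma Gen_form (K : fieldType) (m : nat) (a b : nat -> nat) (f : {mpoly K[Nv m]}) :
  Gen K m a b f ->
  exists (k : nat) (h g : 'I_k -> {mpoly K[Nv m]}),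
      (forall j, inL K m a b (g j) /\ exists d, [/\ (1 <= d)%N, (d <= \sum_(j < m) b j)%N & homogXW K m d (g j)]) /\
      f = \sum_(j < k) h j * g j.
Proof.
elim=> [|h0 g0 f0 [u [Mg [Ng hg]]] _ [k [h [g [hgs ef]]]]].
  by exists 0%N, (fun _ => 0), (fun _ => 0); split; [case|rewrite big_ord0].
exists k.+1, (fun j : 'I_k.+1 => if unlift ord0 j is Some j' then h j' else h0),
   (fun j : 'I_k.+1 => if unlift ord0 j is Some j' then g j' else g0).
split.
  move=> j; case: (unlift ord0 j) => [j'|]; first exact: hgs.
  by split; [exact: good_inL hg | exact: good_homog hg].
by rewrite big_ord_recl /= unlift_none ef; congr (_ + _); apply: eq_bigr => j _; rewrite liftK.
Qed.

Theorem theorem4p1 (K : fieldType) (m : nat) (a b : nat -> nat)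
  (hm : (3 <= m)%N)
  (hba : forall i, (i < m)%N -> (b i < a i)%N)
  (hb2 : exists i j, [/\ (i < m)%N, (j < m)%N, i <> j, b i <> 0%N & b j <> 0%N])
  (hbmin : forall i, (i < m)%N -> (\sum_(j < m) b j <= a i)%N) :
  groebner_basis K m (fun g => Gamma0 K m a b g \/ Gamma3 K m a b g) (inL K m a b) /\
  (exists s, (s <= \sum_(j < m) b j)%N /\ generated_in_degrees K m a b s).
Proof.
have hB : (1 <= \sum_(j < m) b j)%N.
  case: hb2 => i [j [hi _ _ hbi _]]; have := sum_ge_term m i b hi; rewrite big_mkord; lia.
split.
  split; first exact: Gamma_inL.
  move=> f hf hf0.
  have hne : msupp f != [::] by rewrite msupp_eq0.
  have [u [hu hall]] := max_seq m (msupp f) hne.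
  have [v [hv hvu ephi]] := fiber K m a b f u hf hu.
  have hlt : tau_lt m v u.
    by move/allP: hall => /(_ v hv) /orP[/eqP e|] //; move: hvu; rewrite e eqxx.
  have [g [Mg [Ng hg]]] := exists_good K m a b hba hB hbmin u v (esym ephi) hlt.
  have [hg0 hlm] := good_lm K m a b u g Mg Ng hg.
  have hg' := hg; case: hg' => [hG [_ [_ [_ [_ [hdiv _]]]]]].
  exists g, Mg, u; split => //.
    by rewrite /is_lm hu.
  move=> i; have := hdiv i (ltn_ord i); by rewrite /co inord_val.
exists (\sum_(j < m) b j)%N; split => //.
move=> f hf; apply: Gen_form.
exact: (L_gen K m a b hba hB hbmin (size (msupp f))).
Qed.
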